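(* Let $\mathbb X=\langle\mathbb R,<\rangle$ be the real line and $\mathbb Y=\langle\mathbb R\setminus\mathbb Q,<\rangle$ the irrational line. Then $\mathbb X\equiv_{\infty\omega}\mathbb Y$ but $\mathbb X\not\sim_c\mathbb Y$.
   Context: A condensation from $\langle X,<\rangle$ onto $\langle Y,<\rangle$ is a bijection $F:X\to Y$ with $a<b\Rightarrow F(a)<F(b)$; $\mathbb X\sim_c\mathbb Y$ means condensations exist in both directions. $\equiv_{\infty\omega}$ is equivalence with respect to all $L_{\infty\omega}$-sentences. *)

(* Defs.v *)
From Stdlib Require Import Reals QArith.
Open Scope R_scope.

Definition condensation {X Y : Type} (ltX : X -> X -> Prop) (ltY : Y -> Y -> Prop)
  (F : X -> Y) : Prop :=
  (forall a b : X, F a = F b -> a = b) /\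
  (forall y : Y, exists x : X, F x = y) /\
  (forall a b : X, ltX a b -> ltY (F a) (F b)).

Definition condensable {X Y : Type} (ltX : X -> X -> Prop) (ltY : Y -> Y -> Prop) : Prop :=
  exists F : X -> Y, condensation ltX ltY F.

(* X ~_c Y : condensations exist in both directions. *)
Definition bicondensable {X Y : Type} (ltX : X -> X -> Prop) (ltY : Y -> Y -> Prop) : Prop :=
  condensable ltX ltY /\ condensable ltY ltX.

(* Formulas of L_{infinity omega} in the language {<} (with equality):
   variables are indexed by nat; conjunctions over arbitrary index types;
   negation; existential quantification over a single variable. *)
Inductive form : Type :=
| FLt : nat -> nat -> form
| FEq : nat -> nat -> form
| FNot : form -> form
| FAnd : forall I : Type, (I -> form) -> form
| FEx : nat -> form -> form.

Definition upd {X : Type} (a : nat -> X) (i : nat) (x : X) : nat -> X :=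
  fun n => if Nat.eqb n i then x else a n.

Fixpoint sat {X : Type} (lt : X -> X -> Prop) (a : nat -> X) (f : form) : Prop :=
  match f with
  | FLt i j => lt (a i) (a j)
  | FEq i j => a i = a j
  | FNot g => ~ sat lt a g
  | FAnd J fs => forall k : J, sat lt a (fs k)
  | FEx i g => exists x : X, sat lt (upd a i x) g
  end.

Fixpoint free (n : nat) (f : form) : Prop :=
  match f with
  | FLt i j => n = i \/ n = j
  | FEq i j => n = i \/ n = j
  | FNot g => free n g
  | FAnd J fs => exists k : J, free n (fs k)
  | FEx i g => n <> i /\ free n g
  end.

(* A sentence has no free variables (hence every subformula has only
   finitely many free variables, as required in L_{infinity omega}). *)
Definition sentence (f : form) : Prop := forall n, ~ free n f.

(* X ≡_{∞ω} Y : same L_{∞ω} sentences true (truth of a sentence does not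
   depend on the assignment). *)
Definition Linf_equiv {X Y : Type} (ltX : X -> X -> Prop) (ltY : Y -> Y -> Prop) : Prop :=
  forall f : form, sentence f ->
    forall (a : nat -> X) (b : nat -> Y), sat ltX a f <-> sat ltY b f.

Definition irrational (x : R) : Prop := ~ exists q : Q, Q2R q = x.
Definition Irr : Type := { x : R | irrational x }.
Definition Irr_lt (x y : Irr) : Prop := proj1_sig x < proj1_sig y.

(* Main.v *)
Require Import Defs.
From Stdlib Require Import Reals QArith.
From Stdlib Require Import Qreals Lra Lia List Classical ProofIrrelevance ZArith.
Import ListNotations.
Local Open Scope R_scope.

Definition agree {X Y : Type} (ltX : X -> X -> Prop) (ltY : Y -> Y -> Prop)
  (l : list (X*Y)) : Prop :=
  forall p q, In p l -> In q l ->
    (ltX (fst p) (fst q) <-> ltY (snd p) (snd q)) /\ (fst p = fst q <-> snd p = snd q).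

Lemma agree_sub {X Y} (ltX : X -> X -> Prop) (ltY : Y -> Y -> Prop) l1 l2 :
  (forall p, In p l1 -> In p l2) -> agree ltX ltY l2 -> agree ltX ltY l1.
Proof. intros H A p q Hp Hq. apply A; auto. Qed.

Definition swp {X Y : Type} (p : X * Y) : Y * X := (snd p, fst p).

Lemma agree_swap {X Y} (ltX : X -> X -> Prop) (ltY : Y -> Y -> Prop) l :
  agree ltX ltY l -> agree ltY ltX (map swp l).
Proof.
  intros A p q Hp Hq.
  apply in_map_iff in Hp as [p' [<- Hp']].
  apply in_map_iff in Hq as [q' [<- Hq']].
  specialize (A _ _ Hp' Hq'). destruct p', q'; simpl in *; tauto.
Qed.

Lemma swp_swp {X Y} (l : list (X*Y)) : map swp (map swp l) = l.
Proof. induction l as [|[a b] l IH]; simpl; [reflexivity|]. unfold swp at 1 2; simpl. now rewrite IH. Qed.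

Lemma sat_agree {X Y} (ltX : X -> X -> Prop) (ltY : Y -> Y -> Prop)
  (ext : forall l, agree ltX ltY l -> forall x, exists y, agree ltX ltY ((x,y)::l))
  (ext' : forall l, agree ltX ltY l -> forall y, exists x, agree ltX ltY ((x,y)::l)) :
  forall f L (a : nat -> X) (b : nat -> Y),
  (forall n, free n f -> In n L) -> agree ltX ltY (map (fun n => (a n, b n)) L) ->
  (sat ltX a f <-> sat ltY b f).
Proof.
  induction f as [i j|i j|g IH|I fs IH|i g IH]; intros L a b HL HA; simpl.
  - assert (Hi : In (a i, b i) (map (fun n => (a n, b n)) L))
      by (apply (in_map (fun n => (a n, b n))); apply HL; simpl; auto).
    assert (Hj : In (a j, b j) (map (fun n => (a n, b n)) L))
      by (apply (in_map (fun n => (a n, b n))); apply HL; simpl; auto).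
    exact (proj1 (HA _ _ Hi Hj)).
  - assert (Hi : In (a i, b i) (map (fun n => (a n, b n)) L))
      by (apply (in_map (fun n => (a n, b n))); apply HL; simpl; auto).
    assert (Hj : In (a j, b j) (map (fun n => (a n, b n)) L))
      by (apply (in_map (fun n => (a n, b n))); apply HL; simpl; auto).
    exact (proj2 (HA _ _ Hi Hj)).
  - rewrite (IH L a b HL HA). tauto.
  - split; intros H k; pose proof (IH k L a b (fun n Hn => HL n (ex_intro _ k Hn)) HA) as E;
      apply E; apply H.
  - assert (HL' : forall n, free n g -> In n (i :: L)).
    { intros n Hn. destruct (Nat.eq_dec n i) as [e|e]; [left; auto|right; apply HL; simpl; auto]. }
    assert (KEY : forall x y, agree ltX ltY ((x,y) :: map (fun n => (a n, b n)) L) ->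
       agree ltX ltY (map (fun n => (upd a i x n, upd b i y n)) (i :: L))).
    { intros x y A. refine (agree_sub _ _ _ _ _ A). intros p Hp.
      apply in_map_iff in Hp as [n [<- Hn]]. unfold upd.
      destruct (Nat.eqb n i) eqn:E; [left; reflexivity|].
      right. apply (in_map (fun n => (a n, b n))).
      destruct Hn as [<-|Hn]; [rewrite Nat.eqb_refl in E; discriminate|exact Hn]. }
    split.
    + intros [x Hx]. destruct (ext _ HA x) as [y Hy]. exists y.
      apply (IH (i :: L) (upd a i x) (upd b i y) HL' (KEY x y Hy)). exact Hx.
    + intros [y Hy]. destruct (ext' _ HA y) as [x Hx]. exists x.
      apply (IH (i :: L) (upd a i x) (upd b i y) HL' (KEY x y Hx)). exact Hy.
Qed.

Lemma max_ex {A} (r : A -> A -> Prop) (P : A -> Prop)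
  (irr : forall a, ~ r a a) (tr : forall a b c, r a b -> r b c -> r a c) :
  forall l, (forall p, In p l -> ~ P p) \/
     exists m, In m l /\ P m /\ forall p, In p l -> P p -> ~ r m p.
Proof.
  induction l as [|a l IH].
  - left; intros p [].
  - destruct IH as [N|[m [Hm [Pm Mm]]]].
    + destruct (classic (P a)) as [Pa|Pa].
      * right; exists a; split; [left; auto|split; auto].
        intros p [<-|Hp] Pp; [apply irr| exfalso; exact (N p Hp Pp)].
      * left; intros p [<-|Hp]; auto.
    + destruct (classic (P a /\ r m a)) as [[Pa Ra]|NA].
      * right; exists a; split;[left;auto|split;auto].
        intros p [<-|Hp] Pp; [apply irr|]. intro Rap. exact (Mm p Hp Pp (tr _ _ _ Ra Rap)).
      * right; exists m; split;[right;auto|split;auto].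
        intros p [<-|Hp] Pp; [|auto]. intro R; apply NA; auto.
Qed.

Lemma ext_gen {X Y} (ltX : X -> X -> Prop) (ltY : Y -> Y -> Prop)
  (irrX : forall x, ~ ltX x x) (trX : forall a b c, ltX a b -> ltX b c -> ltX a c)
  (totX : forall a b, ltX a b \/ a = b \/ ltX b a)
  (irrY : forall x, ~ ltY x x) (trY : forall a b c, ltY a b -> ltY b c -> ltY a c)
  (totY : forall a b, ltY a b \/ a = b \/ ltY b a)
  (denseY : forall a b, ltY a b -> exists c, ltY a c /\ ltY c b)
  (lowY : forall a, exists c, ltY c a) (highY : forall a, exists c, ltY a c) (y0 : Y) :
  forall l, agree ltX ltY l -> forall x, exists y, agree ltX ltY ((x,y)::l).
Proof.
  intros l A x.
  destruct (classic (exists p, In p l /\ fst p = x)) as [[p [Hp Ep]]|NE].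
  - exists (snd p). intros u v Hu Hv.
    destruct Hu as [<-|Hu]; destruct Hv as [<-|Hv]; simpl.
    + split; [split; intro H; [destruct (irrX _ H) | destruct (irrY _ H)] | tauto].
    + subst x. apply (A p v Hp Hv).
    + subst x. apply (A u p Hu Hp).
    + apply A; auto.
  - assert (K : exists y, (forall q, In q l -> ltX (fst q) x -> ltY (snd q) y) /\
                          (forall q, In q l -> ltX x (fst q) -> ltY y (snd q))).
    { assert (Up : forall q M c, In q l -> In M l -> ~ ltX (fst q) (fst M) ->
                     ltY c (snd M) -> ltY c (snd q)).
      { intros q M c Hq HM N Hc. assert (N' : ~ ltY (snd q) (snd M)) by
          (intro H'; apply N; apply (A q M Hq HM); exact H').
        destruct (totY (snd q) (snd M)) as [h|[h|h]]; [tauto|rewrite h; auto|eauto]. }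
      assert (Dn : forall q m c, In q l -> In m l -> ~ ltX (fst m) (fst q) ->
                     ltY (snd m) c -> ltY (snd q) c).
      { intros q m c Hq Hm N Hc. assert (N' : ~ ltY (snd m) (snd q)) by
          (intro H'; apply N; apply (A m q Hm Hq); exact H').
        destruct (totY (snd q) (snd m)) as [h|[h|h]]; [eauto|rewrite h; auto|tauto]. }
      destruct (max_ex (fun p q => ltX (fst p) (fst q)) (fun p => ltX (fst p) x)
                   (fun a => irrX _) (fun a b c => trX _ _ _) l) as [N1|[m [Hm [Pm Mm]]]];
      destruct (max_ex (fun p q => ltX (fst q) (fst p)) (fun p => ltX x (fst p))
                   (fun a => irrX _) (fun a b c h1 h2 => trX _ _ _ h2 h1) l)
        as [N2|[M [HM [PM MM]]]].
      - exists y0; split; intros q Hq H; exfalso; [eapply N1|eapply N2]; eauto.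
      - destruct (lowY (snd M)) as [c Hc]; exists c; split;
          [intros q Hq H; exfalso; eapply N1; eauto|].
        intros q Hq Hxq. apply (Up q M c Hq HM (MM q Hq Hxq) Hc).
      - destruct (highY (snd m)) as [c Hc]; exists c; split;
          [|intros q Hq H; exfalso; eapply N2; eauto].
        intros q Hq Hxq. apply (Dn q m c Hq Hm (Mm q Hq Hxq) Hc).
      - assert (Hl : ltY (snd m) (snd M)) by (apply (A m M Hm HM); eauto).
        destruct (denseY _ _ Hl) as [c [Hc1 Hc2]]. exists c; split; intros q Hq Hxq.
        + apply (Dn q m c Hq Hm (Mm q Hq Hxq) Hc1).
        + apply (Up q M c Hq HM (MM q Hq Hxq) Hc2). }
    destruct K as [y [K1 K2]]. exists y. intros u v Hu Hv.
    destruct Hu as [<-|Hu]; destruct Hv as [<-|Hv]; simpl.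
    + split; [split; intro H; [destruct (irrX _ H) | destruct (irrY _ H)] | tauto].
    + destruct (totX x (fst v)) as [h|[h|h]].
      * pose proof (K2 v Hv h) as h1.
        assert (h2 : x <> fst v) by (intro e; rewrite e in h; exact (irrX _ h)).
        assert (h3 : y <> snd v) by (intro e; rewrite e in h1; exact (irrY _ h1)).
        tauto.
      * exfalso; apply NE; exists v; auto.
      * pose proof (K1 v Hv h) as h1.
        assert (n1 : ~ ltX x (fst v)) by (intro e; exact (irrX _ (trX _ _ _ h e))).
        assert (n2 : ~ ltY y (snd v)) by (intro e; exact (irrY _ (trY _ _ _ h1 e))).
        assert (h2 : x <> fst v) by (intro e; rewrite e in h; exact (irrX _ h)).
        assert (h3 : y <> snd v) by (intro e; rewrite e in h1; exact (irrY _ h1)).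
        tauto.
    + destruct (totX x (fst u)) as [h|[h|h]].
      * pose proof (K2 u Hu h) as h1.
        assert (n1 : ~ ltX (fst u) x) by (intro e; exact (irrX _ (trX _ _ _ h e))).
        assert (n2 : ~ ltY (snd u) y) by (intro e; exact (irrY _ (trY _ _ _ h1 e))).
        assert (h2 : fst u <> x) by (intro e; rewrite e in h; exact (irrX _ h)).
        assert (h3 : snd u <> y) by (intro e; rewrite e in h1; exact (irrY _ h1)).
        tauto.
      * exfalso; apply NE; exists u; auto.
      * pose proof (K1 u Hu h) as h1.
        assert (h2 : fst u <> x) by (intro e; rewrite e in h; exact (irrX _ h)).
        assert (h3 : snd u <> y) by (intro e; rewrite e in h1; exact (irrY _ h1)).
        tauto.
    + apply A; auto.
Qed.

Lemma no_sqrt2_Z : forall k : nat, forall n d : Z, (0 < d)%Z -> (Z.to_nat d < k)%nat ->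
  (n*n = 2*(d*d))%Z -> False.
Proof.
  induction k as [|k IH]; intros n d Hd Hk E; [lia|].
  destruct (Zeven_odd_dec n) as [en|on].
  - destruct (Zeven_ex n en) as [m Hm]. subst n.
    assert (E2 : (d*d = 2*(m*m))%Z) by nia.
    destruct (Zeven_odd_dec d) as [ed|od].
    + destruct (Zeven_ex d ed) as [e He]. subst d.
      apply (IH m e); [lia|lia|nia].
    + destruct (Zodd_ex d od) as [e He]. subst d. nia.
  - destruct (Zodd_ex n on) as [m Hm]. subst n. nia.
Qed.

Lemma sqrt2_irr : irrational (sqrt 2).
Proof.
  intros [q Hq].
  assert (H2 : Q2R (q*q)%Q = Q2R (2#1)%Q).
  { rewrite Q2R_mult, Hq, sqrt_sqrt by lra. unfold Q2R; simpl. lra. }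
  apply eqR_Qeq in H2. destruct q as [n d]. unfold Qeq, Qmult in H2; simpl in H2.
  apply (no_sqrt2_Z (S (Pos.to_nat d)) n (Zpos d)); [lia|lia|lia].
Qed.

Lemma sqrt2_bounds : (1 < sqrt 2 < 2)%R.
Proof.
  pose proof (sqrt_sqrt 2 ltac:(lra)). pose proof (sqrt_pos 2). nra.
Qed.

Lemma irr_between a b : (a < b)%R -> exists z, irrational z /\ (a < z)%R /\ (z < b)%R.
Proof.
  intros Hab. pose proof sqrt2_bounds as [s1 s2].
  set (d := b - a).
  destruct (classic (irrational (a + d/4))) as [I1|I1].
  { exists (a + d/4); unfold d; split; [auto|lra]. }
  destruct (classic (irrational (a + d/2))) as [I2|I2].
  { exists (a + d/2); unfold d; split; [auto|lra]. }
  destruct (classic (irrational (a + d * (sqrt 2 / 2)))) as [I3|I3].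
  { exists (a + d * (sqrt 2 / 2)); unfold d; split; [auto|nra]. }
  exfalso. unfold irrational in *. apply NNPP in I1, I2, I3.
  destruct I1 as [q1 h1]; destruct I2 as [q2 h2]; destruct I3 as [q3 h3].
  apply sqrt2_irr.
  assert (nz : ~ (q2 - q1)%Q == 0%Q).
  { intro e. assert (Q2R (q2 - q1)%Q = Q2R 0%Q) by (apply Qeq_eqR; exact e).
    rewrite Q2R_minus, h1, h2 in H. unfold Q2R in H; simpl in H. unfold d in H. lra. }
  exists (((q3 - q2) / (q2 - q1) + (2#1)) / (2#1))%Q.
  rewrite Q2R_div, Q2R_plus, Q2R_div, !Q2R_minus, h1, h2, h3 by
    (try exact nz; unfold Qeq; simpl; lia).
  unfold Q2R at 1 2; simpl. unfold d. field. lra.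
Qed.

Lemma Irr_eq (x y : Irr) : proj1_sig x = proj1_sig y -> x = y.
Proof. destruct x, y; simpl; intros ->. f_equal. apply proof_irrelevance. Qed.

Lemma R_ext : forall l, agree Rlt Irr_lt l -> forall x, exists y, agree Rlt Irr_lt ((x,y)::l).
Proof.
  apply ext_gen.
  - exact Rlt_irrefl.
  - exact Rlt_trans.
  - intros a b; destruct (Rtotal_order a b) as [h|[h|h]]; auto.
  - intros x; exact (Rlt_irrefl _).
  - intros a b c; unfold Irr_lt; apply Rlt_trans.
  - intros a b; unfold Irr_lt. destruct (Rtotal_order (proj1_sig a) (proj1_sig b)) as [h|[h|h]]; auto.
    right; left; apply Irr_eq; auto.
  - intros a b h. destruct (irr_between _ _ h) as [z [Iz [h1 h2]]]. exists (exist _ z Iz); auto.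
  - intros a. destruct (irr_between (proj1_sig a - 1) (proj1_sig a) ltac:(lra)) as [z [Iz [h1 h2]]].
    exists (exist _ z Iz); auto.
  - intros a. destruct (irr_between (proj1_sig a) (proj1_sig a + 1) ltac:(lra)) as [z [Iz [h1 h2]]].
    exists (exist _ z Iz); auto.
  - exact (exist _ (sqrt 2) sqrt2_irr).
Qed.

Lemma Irr_ext : forall l, agree Rlt Irr_lt l -> forall y, exists x, agree Rlt Irr_lt ((x,y)::l).
Proof.
  intros l A y.
  assert (E : forall l', agree Irr_lt Rlt l' -> forall y, exists x, agree Irr_lt Rlt ((y,x)::l')).
  { apply ext_gen.
    - intros x; exact (Rlt_irrefl _).
    - intros a b c; unfold Irr_lt; apply Rlt_trans.
    - intros a b; unfold Irr_lt. destruct (Rtotal_order (proj1_sig a) (proj1_sig b)) as [h|[h|h]]; auto.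
      right; left; apply Irr_eq; auto.
    - exact Rlt_irrefl.
    - exact Rlt_trans.
    - intros a b; destruct (Rtotal_order a b) as [h|[h|h]]; auto.
    - intros a b h; exists ((a+b)/2); lra.
    - intros a; exists (a-1); lra.
    - intros a; exists (a+1); lra.
    - exact 0. }
  destruct (E _ (agree_swap _ _ _ A) y) as [x Hx]. exists x.
  apply agree_swap in Hx. simpl in Hx. rewrite swp_swp in Hx. exact Hx.
Qed.

Lemma not_cond : ~ condensable Rlt Irr_lt.
Proof.
  intros [F [Finj [Fsur Fmon]]].
  set (v := fun x => proj1_sig (F x)).
  assert (Vsur : forall z, irrational z -> exists t, v t = z).
  { intros z Iz. destruct (Fsur (exist _ z Iz)) as [t Ht]. exists t. unfold v; rewrite Ht; reflexivity. }
  assert (Vmon : forall x y, x < y -> v x < v y) by (intros; apply Fmon; auto).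
  assert (Vrefl : forall x y, v x < v y -> x < y).
  { intros x y h. destruct (Rtotal_order x y) as [e|[e|e]]; auto.
    - subst; lra.
    - pose proof (Vmon _ _ e); lra. }
  set (S := fun x => v x < 0).
  destruct (Vsur (sqrt 2) sqrt2_irr) as [u Hu].
  destruct (irr_between (-2) (-1) ltac:(lra)) as [z0 [I0 [a0 b0]]].
  destruct (Vsur z0 I0) as [t0 Ht0].
  destruct (completeness S) as [s [Sub Sl]].
  { exists u. intros x Sx. unfold S in Sx. destruct (Rle_lt_dec x u) as [h|h]; auto.
    pose proof (Vmon _ _ h). pose proof sqrt2_bounds. lra. }
  { exists t0. unfold S; lra. }
  destruct (Rtotal_order (v s) 0) as [h|[h|h]].
  - destruct (irr_between _ _ h) as [z [Iz [z1 z2]]]. destruct (Vsur z Iz) as [t Ht].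
    assert (s < t) by (apply Vrefl; lra).
    assert (t <= s) by (apply Sub; unfold S; lra). lra.
  - apply (proj2_sig (F s)). exists 0%Q. fold (v s). rewrite h. unfold Q2R; simpl. lra.
  - destruct (irr_between _ _ h) as [z [Iz [z1 z2]]]. destruct (Vsur z Iz) as [t Ht].
    assert (t < s) by (apply Vrefl; lra).
    assert (s <= t).
    { apply Sl. intros x Sx. unfold S in Sx. left. apply Vrefl. lra. }
    lra.
Qed.

Theorem mainTheorem15 :
  Linf_equiv Rlt Irr_lt /\ ~ bicondensable Rlt Irr_lt.
Proof.
  split.
  - intros f Hs a b. apply (sat_agree Rlt Irr_lt R_ext Irr_ext f [] a b).
    + intros n Hn; exact (Hs n Hn).
    + intros p q [].
  - intros [H _]. exact (not_cond H).
Qed.
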